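(* Let $1\le n<L$ and suppose $p_k,q_k>0$ for all $k$. Let $\pi$ be the stationary distribution of the ASEP on $\Psi_{L,n}$ and $\hat\pi$ the (unique) stationary distribution of the chain on $\Omega_{L,n}$. Then for every $\psi\in\Psi_{L,n}$, $$\pi(\psi)=\sum_{\omega\in\Pi^{-1}(\psi)}\hat\pi(\omega).$$
   Context: Particle labels $k$ are taken modulo $n$, positions modulo $L$. $\Omega_{L,n}$ is the set of words $w_1\cdots w_L$ on the ring $\mathbb{Z}/L\mathbb{Z}$ over the alphabet $\{\bullet_1,\dots,\bullet_n,\Box_1,\dots,\Box_n\}$ in which each $\bullet_k$ occurs exactly once, the letters $\bullet_1,\dots,\bullet_n$ appear in this cyclic order, and the remaining $L-n$ letters are arbitrary $\Box_i$'s. The chain on $\Omega_{L,n}$ has transitions (displayed segments are consecutive positions, rest unchanged, $C$ a possibly empty word in the $\Box$-letters): (T1) $\bullet_k\Box_i \to \Box_i\bullet_k$ at rate $p_k$, if $i\neq k$; (T2) $\bullet_{k-1}\,C\,\bullet_k\Box_k \to \bullet_{k-1}\Box_{k-1}\,C\,\bullet_k$ at rate $p_k$; (T3) $\Box_i\bullet_k \to \bullet_k\Box_i$ at rate $q_k$, if $i\neq k$; (T4) $\Box_k\bullet_k\,C\,\bullet_{k+1} \to \bullet_k\,C\,\Box_{k+1}\bullet_{k+1}$ at rate $q_k$. $\Psi_{L,n}$ is the set of words on the ring $\mathbb{Z}/L\mathbb{Z}$ containing each of $\bullet_1,\dots,\bullet_n$ exactly once in this cyclic order and $L-n$ vacancies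 $\Box$; the ASEP on $\Psi_{L,n}$ has only the transitions $\bullet_k\Box\to\Box\bullet_k$ at rate $p_k$ and $\Box\bullet_k\to\bullet_k\Box$ at rate $q_k$. The map $\Pi:\Omega_{L,n}\to\Psi_{L,n}$ replaces every $\Box_i$ by $\Box$. *)

(* Defs.v *)
From HB Require Import structures.
From mathcomp Require Import all_boot all_order all_algebra.
Set Implicit Arguments. Unset Strict Implicit. Unset Printing Implicit Defensive.
Import Order.TTheory GRing.Theory Num.Theory.

(* Particle labels 1..n of the paper are represented by 'I_n = {0..n-1}
   (label k of the paper is ordinal k-1); k+1, k-1 mod n are ordS, ord_pred.
   Omega letters: inl k = bullet_k, inr i = Box_i.
   Psi letters:   Some k = bullet_k, None = Box. *)

Definition letterO n := ('I_n + 'I_n)%type.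
Definition wordO L n := {ffun 'I_L -> letterO n}.
Definition wordP L n := {ffun 'I_L -> option 'I_n}.

Definition fdist L (x y : 'I_L) : nat := ((y + L - x) %% L)%N.

(* each bullet_k exactly once, and bullets in cyclic order 1,...,n *)
Definition cyc_ok L n (part : 'I_L -> option 'I_n) : bool :=
  [forall k : 'I_n, #|[set x | part x == Some k]| == 1%N] &&
  [forall x0 : 'I_L, forall x : 'I_L, forall y : 'I_L,
   forall k0 : 'I_n, forall k : 'I_n, forall j : 'I_n,
     [&& val k0 == 0%N, part x0 == Some k0, part x == Some k,
         part y == Some j & (k < j)%N] ==> (fdist x0 x < fdist x0 y)%N].

Definition partO n (a : letterO n) : option 'I_n :=
  if a is inl k then Some k else None.

Definition inOmega L n (w : wordO L n) : bool := cyc_ok (fun x => partO (w x)).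
Definition inPsi L n (w : wordP L n) : bool := cyc_ok (fun x => w x).

Definition Proj L n (w : wordO L n) : wordP L n := [ffun z => partO (w z)].

Definition swapw (T : Type) L (w : {ffun 'I_L -> T}) (x y : 'I_L) :
  {ffun 'I_L -> T} :=
  [ffun z => if z == x then w y else if z == y then w x else w z].

Section Rates.
Variables (R : realFieldType) (L n : nat) (p q : 'I_n -> R).
Local Open Scope ring_scope.

Definition asep_rate (w w' : wordP L n) : R :=
  \sum_(x : 'I_L)
   ((if w x is Some k then
       if (w (ordS x) == None) && (swapw w x (ordS x) == w') then p k else 0
     else 0) +
    (if w x is Some k then
       if (w (ord_pred x) == None) && (swapw w x (ord_pred x) == w') then q k else 0
     else 0)).

(* (T2): bullet_{k-1} C bullet_k Box_k -> bullet_{k-1} Box_{k-1} C bullet_k,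
   where bullet_k sits at x. *)
Definition T2res (w : wordO L n) (x : 'I_L) (k : 'I_n) : wordO L n :=
  let y := odflt x [pick y | w y == inl (ord_pred k)] in
  let d := (((x + L - y - 1) %% L).+1)%N in
  [ffun z => let j := fdist z (ordS x) in
     if j == 0%N then inl k
     else if (j < d)%N then w (ord_pred z)
     else if j == d then inr (ord_pred k)
     else w z].

(* (T4): Box_k bullet_k C bullet_{k+1} -> bullet_k C Box_{k+1} bullet_{k+1},
   where bullet_k sits at x. *)
Definition T4res (w : wordO L n) (x : 'I_L) (k : 'I_n) : wordO L n :=
  let y := odflt x [pick y | w y == inl (ordS k)] in
  let d := (((y + L - x - 1) %% L).+1)%N in
  [ffun z => let j := fdist (ord_pred x) z in
     if j == 0%N then inl k
     else if (j < d)%N then w (ordS z)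
     else if j == d then inr (ordS k)
     else w z].

Definition rmove (w : wordO L n) (x : 'I_L) : option ('I_n * wordO L n) :=
  match w x, w (ordS x) with
  | inl k, inr i => Some (k, if i != k then swapw w x (ordS x) else T2res w x k)
  | _, _ => None
  end.

Definition lmove (w : wordO L n) (x : 'I_L) : option ('I_n * wordO L n) :=
  match w x, w (ord_pred x) with
  | inl k, inr i => Some (k, if i != k then swapw w x (ord_pred x) else T4res w x k)
  | _, _ => None
  end.

Definition omega_rate (w w' : wordO L n) : R :=
  \sum_(x : 'I_L)
   ((if rmove w x is Some (k, v) then (if v == w' then p k else 0) else 0) +
    (if lmove w x is Some (k, v) then (if v == w' then q k else 0) else 0)).

End Rates.

Definition stationary (R : realFieldType) (T : finType) (S : pred T)
    (r : T -> T -> R) (pi : T -> R) : Prop :=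
  [/\ (forall x, S x -> 0 <= pi x)%R,
      (\sum_(x | S x) pi x = 1)%R &
      forall y, S y ->
        (\sum_(x | S x) pi x * r x y = pi y * \sum_(z | S z) r y z)%R].

(* Main.v *)
Require Import Defs.
From mathcomp Require Import all_boot all_order all_algebra zify ring lra.
From Stdlib Require Import FunctionalExtensionality.
Import Order.TTheory GRing.Theory Num.Theory.
Set Implicit Arguments. Unset Strict Implicit. Unset Printing Implicit Defensive.

Section Pos.
Variable L : nat.
Implicit Types x y z : 'I_L.+1.

Lemma valS x : val (ordS x) = if x.+1 == L.+1 then 0 else x.+1.
Proof.
rewrite /=; case: eqP => h; first by rewrite h modnn.
by rewrite modn_small //; have := ltn_ord x; lia.
Qed.

Lemma valP x : val (ord_pred x) = if val x == 0 then L else x.-1.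
Proof.
rewrite /=; case: eqP => h; first by rewrite h add0n /= modn_small.
have -> : (x + L.+1).-1 = x.-1 + L.+1 by have := ltn_ord x; lia.
by rewrite modnDr modn_small //; have := ltn_ord x; lia.
Qed.

Lemma fdistE x y : fdist x y = if x <= y then y - x else y + L.+1 - x.
Proof.
rewrite /fdist; case: leqP => h.
  have -> : y + L.+1 - x = (y - x) + L.+1 by lia.
  by rewrite modnDr modn_small //; have := ltn_ord y; lia.
by rewrite modn_small //; have := ltn_ord y; lia.
Qed.

Lemma fdist_lt x y : fdist x y < L.+1.
Proof. rewrite fdistE; have := ltn_ord y; have := ltn_ord x; case: (leqP x y); lia. Qed.

Lemma fdist_eq0 x y : (fdist x y == 0) = (x == y).
Proof.
rewrite fdistE -(inj_eq val_inj) /=; have := ltn_ord y; have := ltn_ord x.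
case: (leqP x y) => ? ? ?; apply/eqP/eqP; lia.
Qed.

Lemma fdistxx x : fdist x x = 0.
Proof. by apply/eqP; rewrite fdist_eq0. Qed.

Lemma fdist_inj x : injective (fdist x).
Proof.
move=> y z; rewrite !fdistE => h; apply/val_inj => /=.
move: h; have := ltn_ord y; have := ltn_ord z; have := ltn_ord x.
case: (leqP x y); case: (leqP x z); lia.
Qed.

Lemma neq_val x y : (x != y) = (nat_of_ord x != nat_of_ord y).
Proof. by rewrite (inj_eq val_inj). Qed.

Lemma valPc z : (nat_of_ord z = 0 /\ nat_of_ord (ord_pred z) = L) \/
                (nat_of_ord z <> 0 /\ nat_of_ord (ord_pred z) = z.-1).
Proof. have := valP z; case: eqP => h ->; by [left|right]. Qed.

Lemma valSc z : (nat_of_ord z = L /\ nat_of_ord (ordS z) = 0) \/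
                (nat_of_ord z <> L /\ nat_of_ord (ordS z) = z.+1).
Proof. have := valS z; case: eqP => h ->; [left|right]; lia. Qed.

Ltac fsolve := repeat (match goal with |- context [if ?b then _ else _] => case: (boolP b) => ? end); lia.

Lemma fdist_pred a z : z != a -> fdist a (ord_pred z) = (fdist a z).-1.
Proof.
rewrite neq_val !fdistE => /eqP h.
have := ltn_ord z; have := ltn_ord a.
case: (valPc z) => [[? ->]|[? ->]]; fsolve.
Qed.

Lemma fdist_pos a z : z != a -> 0 < fdist a z.
Proof. by move=> h; rewrite lt0n fdist_eq0 eq_sym. Qed.

Lemma fdist_predl a z : z != ord_pred a -> fdist (ord_pred a) z = (fdist a z).+1.
Proof.
rewrite neq_val !fdistE => /eqP h.
have := ltn_ord z; have := ltn_ord a.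
case: (valPc a) h => [[? ->]|[? ->]] h; fsolve.
Qed.

Lemma fdist_Sl z a : z != a -> fdist (ordS z) a = (fdist z a).-1.
Proof.
rewrite neq_val !fdistE => /eqP h.
have := ltn_ord z; have := ltn_ord a.
case: (valSc z) => [[? ->]|[? ->]]; fsolve.
Qed.

Lemma fdist0l z : fdist ord0 z = z.
Proof. by rewrite fdistE /= subn0. Qed.

End Pos.


Section Cyc.
Variables L n : nat.
Implicit Types part : 'I_L.+1 -> option 'I_n.+1.

Definition posf part (k : 'I_n.+1) : 'I_L.+1 := odflt ord0 [pick z | part z == Some k].

Lemma cyc_ok_pos part : cyc_ok part -> forall z k, (part z == Some k) = (z == posf part k).
Proof.
move=> /andP [/forallP H1 _] z k.
have /cards1P [y hy] := H1 k.
have E u : (part u == Some k) = (u == y).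
  by have := congr1 (fun A : {set 'I_L.+1} => u \in A) hy; rewrite /= !inE.
rewrite /posf; case: pickP => [u hu|hn] /=.
  by move: hu; rewrite E => /eqP ->; rewrite E.
by move: (hn y); rewrite E eqxx.
Qed.

Lemma cyc_ok_ord part : cyc_ok part -> forall k j : 'I_n.+1, k < j ->
  fdist (posf part ord0) (posf part k) < fdist (posf part ord0) (posf part j).
Proof.
move=> H; have Hp := cyc_ok_pos H; move: H => /andP [_ /forallP H2] k j hkj.
move: (H2 (posf part ord0)) => /forallP /(_ (posf part k)) /forallP /(_ (posf part j)).
move=> /forallP /(_ ord0) /forallP /(_ k) /forallP /(_ j) /implyP; apply.
by rewrite /= !Hp !eqxx hkj.
Qed.

Lemma cyc_ok_intro part (pos : 'I_n.+1 -> 'I_L.+1) :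
  (forall z k, (part z == Some k) = (z == pos k)) ->
  (forall k j : 'I_n.+1, k < j -> fdist (pos ord0) (pos k) < fdist (pos ord0) (pos j)) ->
  cyc_ok part.
Proof.
move=> Hp Ho; apply/andP; split.
  apply/forallP => k; apply/cards1P; exists (pos k); apply/setP => z.
  by rewrite !inE Hp.
apply/forallP => a; apply/forallP => x; apply/forallP => y.
apply/forallP => k0; apply/forallP => k; apply/forallP => j; apply/implyP.
move=> /and5P [h0 ha hx hy hkj].
have e0 : k0 = ord0 by apply/val_inj/eqP.
rewrite e0 in ha.
by move: ha hx hy; rewrite !Hp => /eqP -> /eqP -> /eqP ->; apply: Ho.
Qed.

Lemma eq_cyc_ok (f g : 'I_L.+1 -> option 'I_n.+1) : f =1 g -> cyc_ok f = cyc_ok g.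
Proof. by move=> h; rewrite (functional_extensionality f g h). Qed.

Lemma posf_eq part z k : cyc_ok part -> part z = Some k -> posf part k = z.
Proof. by move=> H h; apply/esym/eqP; rewrite -(cyc_ok_pos H) h. Qed.

Lemma posf_val part k : cyc_ok part -> part (posf part k) = Some k.
Proof. by move=> H; apply/eqP; rewrite (cyc_ok_pos H). Qed.

Lemma cyc_ok_lswap part x k : cyc_ok part -> part x = Some k -> part (ord_pred x) = None ->
  cyc_ok (fun z => if z == x then part (ord_pred x) else if z == ord_pred x then part x else part z).
Proof.
move=> H hx hp.
have Hp := cyc_ok_pos H.
have px : posf part k = x by apply: posf_eq.
have nx : ord_pred x != x by apply/eqP => e; move: hp; rewrite e hx.
have occ j : posf part j != ord_pred x by apply/eqP => e; move: (posf_val j H); rewrite e hp.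
set pos' := fun j => if j == k then ord_pred x else posf part j.
apply: (@cyc_ok_intro _ pos').
  move=> z j; rewrite /pos'.
  case: (eqVneq z x) => [->|zx]; rewrite ?hp.
    case: (eqVneq j k) => [->|jk]; first by rewrite [x == _]eq_sym (negbTE nx).
    by rewrite -Hp hx; apply/esym/negbTE; apply/eqP => -[e]; rewrite e eqxx in jk.
  case: (eqVneq z (ord_pred x)) => [->|zp].
    case: (eqVneq j k) => [->|jk]; first by rewrite hx !eqxx.
    rewrite hx [ord_pred x == _]eq_sym (negbTE (occ j)); apply/negbTE; apply/eqP => -[e]; by rewrite e eqxx in jk.
  case: (eqVneq j k) => [->|jk]; last by rewrite Hp.
  by rewrite (negbTE zp) Hp px (negbTE zx).
have Ho := cyc_ok_ord H.
move=> i j hij; rewrite /pos'.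
case: (eqVneq k ord0) => [k0|k0].
  subst k.
  have ni : i != ord0 -> posf part i != ord_pred x by move=> _; exact: occ.
  case: (eqVneq i ord0) => [ei|ei].
    subst i; rewrite ?eqxx fdistxx.
    have jn : j != ord0 by apply/eqP => e; move: hij; rewrite e.
    by rewrite ?(negbTE jn) fdist_pos // occ.
  have jn : j != ord0 by apply/eqP => e; move: hij; rewrite e.
  rewrite ?(negbTE jn) !fdist_predl ?occ //.
  by move: (Ho i j hij); rewrite px.
rewrite ?[ord0 == k]eq_sym ?(negbTE k0).
have xn : x != posf part ord0 by apply/eqP => e; move: (posf_val ord0 H); rewrite -e hx => -[]; apply/eqP.
have Hx : forall u, fdist (posf part ord0) (posf part u) != fdist (posf part ord0) (ord_pred x).
  by move=> u; apply/eqP => /fdist_inj e; move: (occ u); rewrite e eqxx.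
have fx : fdist (posf part ord0) (ord_pred x) = (fdist (posf part ord0) x).-1 by rewrite fdist_pred.
have fpos : 0 < fdist (posf part ord0) x by rewrite fdist_pos.
case: (eqVneq i k) => [ei|ei]; case: (eqVneq j k) => [ej|ej].
- by subst; rewrite ltnn in hij.
- subst i; rewrite fx; move: (Ho k j hij); rewrite px; lia.
- subst j; move: (Ho i k hij); rewrite px fx => h.
  have : fdist (posf part ord0) (posf part i) != fdist (posf part ord0) (ord_pred x).
    exact: Hx.
  rewrite fx; lia.
- exact: Ho.
Qed.

End Cyc.

Section Uniq.
Local Open Scope ring_scope.
Variables (R : realFieldType) (T : finType) (S : pred T) (r : T -> T -> R).
Hypothesis r_ge0 : forall x y, 0 <= r x y.

Definition edge x y := [/\ S x, S y, 0 < r x y & 0 < r y x].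
Inductive reach : T -> T -> Prop :=
 | reach0 x : reach x x
 | reachS x y z : edge x y -> reach y z -> reach x z.

Definition balance (nu : T -> R) := forall y, S y ->
  \sum_(x | S x) nu x * r x y = nu y * \sum_(z | S z) r y z.

Lemma zero_back nu : balance nu -> (forall x, S x -> 0 <= nu x) ->
  forall x y, S x -> S y -> 0 < r x y -> nu y = 0 -> nu x = 0.
Proof.
move=> bal nn x y Sx Sy rxy ny.
have := bal y Sy; rewrite ny mul0r => /psumr_eq0P H.
have /H : S x by [].
move=> /(_ _) h; have {}h := h (fun i Si => mulr_ge0 (nn i Si) (r_ge0 i y)).
by move: h => /eqP; rewrite mulf_eq0 (gt_eqF rxy) orbF => /eqP.
Qed.

Lemma reach_zero nu : balance nu -> (forall x, S x -> 0 <= nu x) ->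
  forall x y, reach x y -> (nu y = 0 <-> nu x = 0).
Proof.
move=> bal nn x y; elim => [//|a b c [Sa Sb rab rba] _ IH].
split => h.
  by apply: (zero_back bal nn Sa Sb rab); apply/IH.
by apply/IH; apply: (zero_back bal nn Sb Sa rba).
Qed.

Hypothesis conn : exists c, S c /\ forall x, S x -> reach x c.

Lemma all_zero nu : balance nu -> (forall x, S x -> 0 <= nu x) ->
  forall y, S y -> nu y = 0 -> forall x, S x -> nu x = 0.
Proof.
move=> bal nn y Sy ny x Sx; have [c [Sc Hc]] := conn.
have nc : nu c = 0 by apply/(reach_zero bal nn (Hc y Sy)).
exact/(reach_zero bal nn (Hc x Sx)).
Qed.

Lemma stat_unique pi mu : stationary S r pi -> stationary S r mu ->
  forall x, S x -> pi x = mu x.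
Proof.
move=> [pn p1 pb] [mn m1 mb].
have [c [Sc _]] := conn.
have mpos : forall x, S x -> 0 < mu x.
  move=> x Sx; rewrite lt_def mn // andbT; apply/eqP => mx.
  have := all_zero mb mn Sx mx => h.
  by move: m1; rewrite big1 // => /esym/eqP; rewrite oner_eq0.
pose F x := pi x / mu x.
have [xs Sxs Hmin] := arg_minP F Sc.
set t := F xs.
pose nu x := pi x - t * mu x.
have nn : forall x, S x -> 0 <= nu x.
  move=> x Sx; rewrite /nu subr_ge0 -ler_pdivlMr ?mpos //.
  exact: Hmin.
have nxs : nu xs = 0.
  by rewrite /nu /t /F divfK ?subrr // gt_eqF // mpos.
have bal : balance nu.
  move=> y Sy; rewrite /nu.
  under eq_bigr do rewrite mulrBl -mulrA.
  rewrite sumrB -mulr_sumr pb // mb // mulrBl mulrA //.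
have z := all_zero bal nn Sxs nxs.
have ht : t = 1.
  have : \sum_(x | S x) nu x = 0 by rewrite big1 // => x Sx; exact: z.
  by rewrite /nu sumrB -mulr_sumr p1 m1 mulr1 => /eqP; rewrite subr_eq0 => /eqP.
move=> x Sx; have := z x Sx; rewrite /nu ht mul1r => /eqP; rewrite subr_eq0 => /eqP //.
Qed.

End Uniq.


Section Conn.
Variables (R : realFieldType) (L n : nat) (p q : 'I_n.+1 -> R).
Hypotheses (pP : forall k, (0 < p k)%R) (qP : forall k, (0 < q k)%R).
Implicit Types psi : wordP L.+1 n.+1.

Lemma inPsi_cyc psi : inPsi psi = cyc_ok (fun z => psi z).
Proof. by []. Qed.

Lemma inPsi_lswap psi x k : inPsi psi -> psi x = Some k -> psi (ord_pred x) = None ->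
  inPsi (swapw psi x (ord_pred x)).
Proof.
move=> H hx hp; rewrite /inPsi (@eq_cyc_ok _ _ _ (fun z => if z == x then psi (ord_pred x)
  else if z == ord_pred x then psi x else psi z)); last by move=> z; rewrite ffunE.
exact: cyc_ok_lswap hx hp.
Qed.

Lemma asep_ge0 psi psi' : (0 <= asep_rate p q psi psi')%R.
Proof.
apply: sumr_ge0 => x _; apply: addr_ge0.
  by case: (psi x) => [k|//]; case: ifP => // _; apply: ltW.
by case: (psi x) => [k|//]; case: ifP => // _; apply: ltW.
Qed.

Lemma swapwK (T : Type) (w : {ffun 'I_L.+1 -> T}) x y : swapw (swapw w x y) y x = w.
Proof.
apply/ffunP => z; rewrite !ffunE.
case: (eqVneq z y) => [->|zy]; rewrite ?ffunE ?eqxx.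
  by case: (eqVneq y x) => [->|].
case: (eqVneq z x) => [->|zx]; rewrite ?ffunE ?eqxx.
  by case: (eqVneq x y) => [->|].
by rewrite ?(negbTE zy) ?(negbTE zx).
Qed.

Lemma asep_lpos psi x k : psi x = Some k -> psi (ord_pred x) = None ->
  (0 < asep_rate p q psi (swapw psi x (ord_pred x)))%R.
Proof.
move=> hx hp; rewrite /asep_rate (bigD1 x) //=.
apply: (@lt_le_trans _ _ (q k)); first exact: qP.
rewrite -addrA; apply: ler_wpDl.
  by rewrite hx; case: ifP => // _; apply: ltW.
rewrite hx hp !eqxx /= lerDl.
apply: sumr_ge0 => z _; apply: addr_ge0.
  by case: (psi z) => [j|//]; case: ifP => // _; apply: ltW.
by case: (psi z) => [j|//]; case: ifP => // _; apply: ltW.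
Qed.

Lemma asep_rpos psi x k : psi x = Some k -> psi (ord_pred x) = None ->
  (0 < asep_rate p q (swapw psi x (ord_pred x)) psi)%R.
Proof.
move=> hx hp; set w := swapw psi x (ord_pred x).
have nx : ord_pred x != x by apply/eqP => e; move: hp; rewrite e hx.
have w1 : w (ord_pred x) = Some k by rewrite /w ffunE (negbTE nx) eqxx.
have w2 : w (ordS (ord_pred x)) = None by rewrite ord_predK /w ffunE eqxx.
have w3 : swapw w (ord_pred x) (ordS (ord_pred x)) = psi by rewrite ord_predK swapwK.
rewrite /asep_rate (bigD1 (ord_pred x)) //=.
apply: (@lt_le_trans _ _ (p k)); first exact: pP.
rewrite -addrA w1 w2 w3 !eqxx /= lerDl.
apply: addr_ge0.
  by case: ifP => // _; apply: ltW.
apply: sumr_ge0 => z _; apply: addr_ge0.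
  by case: (w z) => [j|//]; case: ifP => // _; apply: ltW.
by case: (w z) => [j|//]; case: ifP => // _; apply: ltW.
Qed.

Definition pos psi := posf (fun z => psi z).

Definition Phi psi : nat :=
  L.+1 * pos psi ord0 + \sum_(k : 'I_n.+1) fdist (pos psi ord0) (pos psi k).

Definition final psi := (nat_of_ord (pos psi ord0) == 0%N) &&
  [forall k : 'I_n.+1, (k != ord0) ==> (psi (ord_pred (pos psi k)) != None)].

Lemma pos_val psi k : inPsi psi -> psi (pos psi k) = Some k.
Proof. exact: posf_val. Qed.

Lemma pos_eq psi z k : inPsi psi -> psi z = Some k -> pos psi k = z.
Proof. exact: posf_eq. Qed.

Lemma occ_all psi a : (forall z, psi z != None -> psi (ord_pred z) != None) ->
  psi a != None -> forall z, psi z != None.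
Proof.
move=> H ha.
suff: forall m z, fdist z a = m -> psi z != None by move=> h z; exact: (h _ z erefl).
elim=> [|m IH] z.
  by move/eqP; rewrite fdist_eq0 => /eqP ->.
move=> hz; have za : z != a by apply/eqP => e; move: hz; rewrite e fdistxx.
have := IH (ordS z); rewrite fdist_Sl // hz => /(_ erefl) /H.
by rewrite ordSK.
Qed.

Lemma not_all_occ psi : inPsi psi -> (n < L)%N -> ~ (forall z, psi z != None).
Proof.
move=> H nL hall.
pose f z := odflt ord0 (psi z).
have finj : injective f.
  move=> z1 z2; rewrite /f.
  case e1: (psi z1) (hall z1) => [k1|//] _; case e2: (psi z2) (hall z2) => [k2|//] _ /= e.
  by rewrite -(pos_eq H e1) -(pos_eq H e2) e.
by have := leq_card f finj; rewrite !card_ord; lia.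
Qed.

Lemma descent psi : inPsi psi -> (n < L)%N -> ~~ final psi ->
  exists psi', edge (@inPsi L.+1 n.+1) (asep_rate p q) psi psi' /\ (Phi psi' < Phi psi)%N.
Proof.
move=> H nL nf.
have HC : cyc_ok (fun z => psi z) by [].
case: (boolP [exists k : 'I_n.+1, (k != ord0) && (psi (ord_pred (pos psi k)) == None)]).
  move=> /existsP [k /andP [k0 /eqP hp]].
  set x := pos psi k; have hx : psi x = Some k by exact: pos_val.
  set psi' := swapw psi x (ord_pred x).
  have H' : inPsi psi' by exact: inPsi_lswap hx hp.
  exists psi'; split.
    by split => //; [exact: asep_lpos hx hp | exact: asep_rpos hx hp].
  have nx : ord_pred x != x by apply/eqP => e; move: hp; rewrite e hx.
  have pos' j : pos psi' j = if j == k then ord_pred x else pos psi j.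
    apply: pos_eq => //; rewrite /psi' ffunE.
    case: (eqVneq j k) => [->|jk]; first by rewrite (negbTE nx) eqxx.
    have a1 : pos psi j != x by apply/eqP => e; move: (pos_val j H); rewrite e hx => -[] e'; rewrite e' eqxx in jk.
    have a2 : pos psi j != ord_pred x by apply/eqP => e; move: (pos_val j H); rewrite e hp.
    by rewrite (negbTE a1) (negbTE a2) pos_val.
  have p0 : pos psi' ord0 = pos psi ord0 by rewrite pos' eq_sym (negbTE k0).
  rewrite /Phi p0 ltn_add2l (bigD1 k) //= [X in (_ < X)%N](bigD1 k) //=.
  rewrite pos' eqxx.
  have -> : \sum_(i < n.+1 | i != k) fdist (pos psi ord0) (pos psi' i) =
            \sum_(i < n.+1 | i != k) fdist (pos psi ord0) (pos psi i).
    by apply: eq_bigr => i ik; rewrite pos' (negbTE ik).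
  rewrite ltn_add2r fdist_pred.
    have : pos psi k != pos psi ord0.
      by apply/eqP => e; move: (pos_val k H); rewrite e pos_val // => -[] e'; rewrite e' eqxx in k0.
    by rewrite /x; move/fdist_pos; lia.
  by apply/eqP => e; move: (pos_val k H); rewrite -/x e pos_val // => -[] e'; rewrite e' eqxx in k0.
move=> hB.
have hB' : forall k, k != ord0 -> psi (ord_pred (pos psi k)) != None.
  move=> k k0; apply/negP => /eqP e; move/negP: hB; apply; apply/existsP; exists k.
  by rewrite k0 e eqxx.
set x := pos psi ord0; have hx : psi x = Some ord0 by exact: pos_val.
have hp : psi (ord_pred x) = None.
  apply/eqP; apply/negPn/negP => hne.
  apply: (not_all_occ H nL); apply: (occ_all (a := x)); last by rewrite hx.
  move=> z; case e: (psi z) => [j|//] _.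
  have -> : z = pos psi j by rewrite (pos_eq H e).
  case: (eqVneq j ord0) => [->|j0]; first exact: hne.
  exact: hB'.
have x0 : nat_of_ord x != 0%N.
  apply/negP => /eqP e; move/negP: nf; apply; rewrite /final -/x e eqxx /=.
  by apply/forallP => k; apply/implyP; apply: hB'.
set psi' := swapw psi x (ord_pred x).
have H' : inPsi psi' by exact: inPsi_lswap hx hp.
exists psi'; split.
  by split => //; [exact: asep_lpos hx hp | exact: asep_rpos hx hp].
have nx : ord_pred x != x by apply/eqP => e; move: hp; rewrite e hx.
have pos' j : pos psi' j = if j == ord0 then ord_pred x else pos psi j.
  apply: pos_eq => //; rewrite /psi' ffunE.
  case: (eqVneq j ord0) => [->|jk]; first by rewrite (negbTE nx) eqxx.
  have a1 : pos psi j != x by apply/eqP => e; move: (pos_val j H); rewrite e hx => -[] e'; rewrite e' eqxx in jk.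
  have a2 : pos psi j != ord_pred x by apply/eqP => e; move: (pos_val j H); rewrite e hp.
  by rewrite (negbTE a1) (negbTE a2) pos_val.
have occ j : pos psi j != ord_pred x by apply/eqP => e; move: (pos_val j H); rewrite e hp.
have hs : (\sum_(k < n.+1) fdist (pos psi' ord0) (pos psi' k) <=
          \sum_(k < n.+1) (fdist x (pos psi k) + 1))%N.
  apply: leq_sum => k _; rewrite !pos' eqxx addn1.
  case: (eqVneq k ord0) => [->|k0]; first by rewrite fdistxx.
  by rewrite fdist_predl // occ.
move: hs; rewrite big_split /= sum_nat_const card_ord muln1 => hs.
rewrite /Phi -/x pos' eqxx.
move: hs; rewrite pos' eqxx => hs; move/eqP: x0 => x0.
case: (valPc x) => [[a b]|[a b]] //; rewrite b.
have : (L.+1 * x.-1 + L.+1 = L.+1 * x)%N by rewrite -mulnSr prednK // lt0n; apply/eqP.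
move: (L.+1 * x.-1)%N (L.+1 * x)%N => A B.
set S1 := \sum_(k < n.+1) fdist (ord_pred x) _ in hs *. set S2 := \sum_(k < n.+1) fdist x _ in hs *. clearbody S1 S2; lia.
Qed.

Lemma reach_final psi : inPsi psi -> (n < L)%N ->
  exists psi', [/\ inPsi psi', final psi' & reach (@inPsi L.+1 n.+1) (asep_rate p q) psi psi'].
Proof.
move=> H nL.
move: {2}(Phi psi) (leqnn (Phi psi)) => m; elim: m psi H => [|m IH] psi H hm.
  case: (boolP (final psi)) => f; first by exists psi; split => //; apply: reach0.
  have [psi' [e lt]] := descent H nL f; lia.
case: (boolP (final psi)) => f; first by exists psi; split => //; apply: reach0.
have [psi' [e lt]] := descent H nL f.
have H1 : inPsi psi' by case: e.
have hm' : (Phi psi' <= m)%N by lia.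
have [psi'' [H'' f'' r'']] := IH psi' H1 hm'.
by exists psi''; split => //; apply: reachS e r''.
Qed.

Lemma final_pos psi : inPsi psi -> final psi -> forall k, nat_of_ord (pos psi k) = k.
Proof.
move=> H /andP [/eqP h0 /forallP hB].
have e0 : pos psi ord0 = ord0 by apply/val_inj.
have Ho := cyc_ok_ord H.
have fv z : fdist (pos psi ord0) z = z by rewrite e0 fdist0l.
have mono (a b : 'I_n.+1) : (a < b)%N -> (nat_of_ord (pos psi a) < pos psi b)%N.
  by move=> ab; have := Ho a b ab; rewrite -/(pos psi a) -/(pos psi b) -/(pos psi ord0) !fv.
have lo : forall m (k : 'I_n.+1), nat_of_ord k = m -> (m <= pos psi k)%N.
  elim=> [//|m IH] k hk.
  have hm : (m < n.+1)%N by have := ltn_ord k; lia.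
  have := IH (Ordinal hm) erefl; have := mono (Ordinal hm) k; rewrite /= hk; lia.
have hi : forall m (k : 'I_n.+1), nat_of_ord k = m -> (pos psi k <= m)%N.
  elim/ltn_ind => m IH k hk.
  case: (eqVneq k ord0) => [->|k0]; first by rewrite h0.
  have := hB k; rewrite k0 /=; case e: (psi _) => [j|//] _.
  have pj := pos_eq H e.
  have kn : pos psi k != ord0.
    by apply/eqP => e'; rewrite -e0 in e'; move: (pos_val k H); rewrite e' pos_val // => -[] e''; rewrite e'' eqxx in k0.
  have vj : nat_of_ord (pos psi j) = (pos psi k).-1.
    by rewrite pj; case: (valPc (pos psi k)) => [[a b]|[a b]] //; move: kn; rewrite neq_val /= a.
  have jk : (j < k)%N.
    case: (ltngtP j k) => // c.
      by have := mono k j c; lia.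
    by move/val_inj: c => c; move: vj; rewrite c; move: kn; rewrite neq_val /=; lia.
  have := IH j (ltac:(lia)) j erefl; lia.
by move=> k; apply/eqP; rewrite eqn_leq (hi _ k erefl) (lo _ k erefl).
Qed.

Lemma final_uniq psi1 psi2 : inPsi psi1 -> inPsi psi2 -> final psi1 -> final psi2 -> psi1 = psi2.
Proof.
move=> H1 H2 f1 f2.
have ep k : pos psi1 k = pos psi2 k by apply/val_inj; rewrite /= !final_pos.
apply/ffunP => z.
case e1: (psi1 z) => [k|].
  by rewrite -(pos_eq H1 e1) ep pos_val.
case e2: (psi2 z) => [k|//].
by move: e1; rewrite -(pos_eq H2 e2) -ep pos_val.
Qed.

Lemma psi_conn psi0 : inPsi psi0 -> (n < L)%N ->
  exists c, inPsi c /\ forall x, inPsi x -> reach (@inPsi L.+1 n.+1) (asep_rate p q) x c.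
Proof.
move=> H0 nL; have [c [Hc fc _]] := reach_final H0 nL.
exists c; split => // x Hx; have [c' [Hc' fc' r]] := reach_final Hx nL.
by rewrite (final_uniq Hc' Hc fc' fc) in r.
Qed.

End Conn.


Ltac fsolve2 := repeat (match goal with |- context [if ?b then _ else _] => case: (boolP b) => ? end); lia.

Section F1.
Variable L : nat.
Implicit Types x y z u a : 'I_L.+1.

Lemma fdistC x y : ((nat_of_ord x <= y)%N /\ fdist x y = (y - x)%N) \/
                   ((y < nat_of_ord x)%N /\ fdist x y = (y + L.+1 - x)%N).
Proof. rewrite fdistE; case: leqP => h; [left|right]; lia. Qed.

Lemma fdist_shift a y u : fdist y u =
  if (fdist a y <= fdist a u)%N then (fdist a u - fdist a y)%N else (fdist a u + L.+1 - fdist a y)%N.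
Proof.
have := ltn_ord a; have := ltn_ord y; have := ltn_ord u.
case: (fdistC y u) => [[? ->]|[? ->]]; case: (fdistC a y) => [[? ->]|[? ->]];
  case: (fdistC a u) => [[? ->]|[? ->]]; fsolve2.
Qed.

Lemma fdist_Sr z x : z != ordS x -> fdist z (ordS x) = (fdist z x).+1.
Proof.
rewrite neq_val => /eqP h; have := ltn_ord z; have := ltn_ord x.
case: (valSc x) h => [[a b]|[a b]] h; rewrite !fdistE b; fsolve2.
Qed.

Lemma arith1 y x z : y != x -> y != ordS x -> (fdist z x < fdist y x)%N ->
  (fdist y z + fdist z x = fdist y x)%N.
Proof.
rewrite !neq_val => /eqP h1 /eqP h2.
have := ltn_ord z; have := ltn_ord x; have := ltn_ord y.
case: (valSc x) h2 => [[a b]|[a b]]; rewrite b => h2;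
case: (fdistC y z) => [[? ->]|[? ->]]; case: (fdistC z x) => [[? ->]|[? ->]];
  case: (fdistC y x) => [[? ->]|[? ->]]; fsolve2.
Qed.

Lemma d_eq y x : y != x -> (((x + L.+1 - y - 1) %% L.+1).+1 = fdist y x)%N.
Proof.
rewrite neq_val => /eqP h; have := ltn_ord x; have := ltn_ord y.
rewrite fdistE; case: (leqP y x) => h2 ? ?.
  have -> : (x + L.+1 - y - 1 = (x - y - 1) + L.+1)%N by lia.
  rewrite modnDr modn_small; lia.
rewrite modn_small; lia.
Qed.

Lemma d_eqx x : (((x + L.+1 - x - 1) %% L.+1).+1 = L.+1)%N.
Proof. by rewrite addKn subn1 /= modn_small. Qed.

Lemma d_eq' y x : y != x -> (((y + L.+1 - x - 1) %% L.+1).+1 = fdist x y)%N.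
Proof. by rewrite eq_sym; apply: d_eq. Qed.

End F1.

Section Cgap.
Variables L n : nat.
Variable part : 'I_L.+1 -> option 'I_n.+1.
Hypothesis H : cyc_ok part.

Lemma gap (k : 'I_n.+1) u :
  (0 < fdist (posf part k) u)%N -> (fdist (posf part k) u < fdist (posf part k) (posf part (ordS k)))%N ->
  part u = None.
Proof.
move=> h1 h2; case e: (part u) => [j|] //.
have pu := posf_eq H e.
set P := posf part in pu h1 h2.
have Ho := cyc_ok_ord H; rewrite -/P in Ho.
set a := P ord0 in Ho.
have jk : j != k by apply/eqP => e'; move: h1; rewrite -pu e' fdistxx.
have jk' : j != ordS k by apply/eqP => e'; move: h2; rewrite -pu e' ltnn.
have sh := fdist_shift a (P k) u; have sh2 := fdist_shift a (P k) (P (ordS k)).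
rewrite sh sh2 -pu in h2; rewrite sh -pu in h1.
have bd := fdist_lt a (P j); have bk := fdist_lt a (P k); have bk' := fdist_lt a (P (ordS k)).
case: (valSc k) => [[k1 k2]|[k1 k2]].
  have e0 : ordS k = ord0 by apply/val_inj.
  rewrite e0 /a fdistxx in h2.
  have jl : (j < k)%N by have := ltn_ord j; move: jk; rewrite neq_val; lia.
  have := Ho j k jl.
  have j0 : (0 < fdist a (P j))%N.
    apply: fdist_pos; rewrite /a; apply/eqP => /(congr1 part); rewrite posf_val // posf_val // => -[] e1.
    by move: jk'; rewrite e0 e1 eqxx.
  move: h1 h2; fsolve2.
move: jk jk'; rewrite !neq_val k2 => /eqP jk /eqP jk'.
case: (ltngtP j k) => c.
- have := Ho j k c; have := Ho k (ordS k) (ltac:(rewrite k2; lia)); move: h1 h2; fsolve2.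
- have c' : (ordS k < j)%N by rewrite k2; lia.
  have := Ho _ _ c'; have := Ho k (ordS k) (ltac:(rewrite k2; lia)); move: h1 h2; fsolve2.
- by move: jk; rewrite c.
Qed.

End Cgap.


Section F2.
Variables L n : nat.
Implicit Types w : wordO L.+1 n.+1.

Lemma proj_swap w x y : Proj (swapw w x y) = swapw (Proj w) x y.
Proof. by apply/ffunP => z; rewrite !ffunE; case: ifP => _ //; case: ifP. Qed.

Lemma only_one w x k : inOmega w -> w x = inl k -> ord_pred k = k ->
  forall u, u != x -> partO (w u) = None.
Proof.
move=> H hx hk u ux; case e: (w u) => [j|//] /=.
have Hp := cyc_ok_pos H.
have n0 : n = 0%N by move: (valPc k); rewrite hk; lia.
have jk : j = k by apply: val_inj; have := ltn_ord j; have := ltn_ord k; move: n0; clear; rewrite /=; lia.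
have : (fun z => partO (w z)) u == Some j by rewrite e.
have : (fun z => partO (w z)) x == Some k by rewrite hx.
by rewrite !Hp jk => /eqP <- /eqP e'; move: ux; rewrite e' eqxx.
Qed.

Lemma proj_T2 w x k : inOmega w -> w x = inl k -> w (ordS x) = inr k ->
  Proj (T2res w x k) = swapw (Proj w) x (ordS x).
Proof.
move=> H hx hs.
set part := fun z => partO (w z).
have Hp := cyc_ok_pos H; rewrite -/part in Hp.
have px : posf part k = x by apply/esym/eqP; rewrite -Hp /part hx.
have nSx : ordS x != x by apply/eqP => e; move: hs; rewrite e hx.
rewrite /T2res; case: pickP => [y /eqP hy|hn]; last first.
  by have := posf_val (ord_pred k) H; rewrite -/part /part; case e: (w _) => [j|//] [] ej; move: (hn (posf part (ord_pred k))); rewrite e ej eqxx.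
have py : posf part (ord_pred k) = y by apply/esym/eqP; rewrite -Hp /part hy.
apply/ffunP => z; rewrite !ffunE /=.
case: (eqVneq z (ordS x)) => [->|zS].
  by rewrite fdistxx /= (negbTE nSx) hx.
have j0 : fdist z (ordS x) != 0%N by rewrite fdist_eq0.
rewrite (negbTE j0).
case: (eqVneq y x) => [eyx|yx].
  (* only one particle *)
  have hk : ord_pred k = k by move: hy; rewrite eyx hx => -[].
  have oo := only_one H hx hk.
  rewrite eyx d_eqx fdist_lt.
  have pz : ord_pred z != x by apply/eqP => e; move: zS; rewrite -e ord_predK eqxx.
  rewrite oo //; case: (eqVneq z x) => [_|zx]; first by rewrite hs.
  by rewrite oo.
have yS : y != ordS x by apply/eqP => e; move: hy; rewrite e hs.
rewrite d_eq // fdist_Sr //.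
have gp u : (0 < fdist y u)%N -> (fdist y u < fdist y x)%N -> partO (w u) = None.
  move=> a b; have := @gap _ _ part H (ord_pred k) u; rewrite ord_predK py px; exact.
have fyx : (0 < fdist y x)%N by apply: fdist_pos; rewrite eq_sym.
case: (eqVneq z x) => [->|zx].
  rewrite fdistxx hs /=.
  case: (ltnP 1 (fdist y x)) => h1; last by have -> : (1 == fdist y x)%N by apply/eqP; lia.
  have fp : fdist y (ord_pred x) = (fdist y x).-1 by rewrite fdist_pred // eq_sym.
  apply: gp; rewrite fp; lia.
have fzx : (0 < fdist z x)%N by apply: fdist_pos; rewrite eq_sym.
case: (ltnP (fdist z x).+1 (fdist y x)) => h1.
  have e1 := arith1 yx yS (ltac:(lia) : (fdist z x < fdist y x)%N).
  have zy : z != y by apply/eqP => e; move: h1; rewrite e; lia.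
  have fp : fdist y (ord_pred z) = (fdist y z).-1 by rewrite fdist_pred.
  have g1 : partO (w z) = None by apply: gp; lia.
  have g2 : partO (w (ord_pred z)) = None by apply: gp; rewrite fp; lia.
  by rewrite g1 g2.
case: eqP => h2 //.
have e1 := arith1 yx yS (ltac:(lia) : (fdist z x < fdist y x)%N).
have g1 : partO (w z) = None by apply: gp; lia.
by rewrite g1.
Qed.

Lemma proj_T4 w x k : inOmega w -> w x = inl k -> w (ord_pred x) = inr k ->
  Proj (T4res w x k) = swapw (Proj w) x (ord_pred x).
Proof.
move=> H hx hs.
set part := fun z => partO (w z).
have Hp := cyc_ok_pos H; rewrite -/part in Hp.
have px : posf part k = x by apply/esym/eqP; rewrite -Hp /part hx.
have nPx : ord_pred x != x by apply/eqP => e; move: hs; rewrite e hx.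
rewrite /T4res; case: pickP => [y /eqP hy|hn]; last first.
  by have := posf_val (ordS k) H; rewrite -/part /part; case e: (w _) => [j|//] [] ej; move: (hn (posf part (ordS k))); rewrite e ej eqxx.
have py : posf part (ordS k) = y by apply/esym/eqP; rewrite -Hp /part hy.
apply/ffunP => z; rewrite !ffunE /=.
case: (eqVneq z (ord_pred x)) => [->|zP].
  by rewrite fdistxx /= (negbTE nPx) hx.
have j0 : fdist (ord_pred x) z != 0%N by rewrite fdist_eq0 eq_sym.
rewrite (negbTE j0).
case: (eqVneq y x) => [eyx|yx].
  have hk : ordS k = k by move: hy; rewrite eyx hx => -[].
  have hk' : ord_pred k = k by rewrite -{1}hk ordSK.
  have oo := only_one H hx hk'.
  rewrite eyx d_eqx fdist_lt.
  have pz : ordS z != x by apply/eqP => e; move: zP; rewrite -e ordSK eqxx.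
  rewrite oo //; case: (eqVneq z x) => [_|zx]; first by rewrite hs.
  by rewrite oo.
have yP : y != ord_pred x by apply/eqP => e; move: hy; rewrite e hs.
rewrite d_eq' // (fdist_predl zP).
have gp u : (0 < fdist x u)%N -> (fdist x u < fdist x y)%N -> partO (w u) = None.
  move=> a b; have := @gap _ _ part H k u; rewrite py px; exact.
have fxy : (0 < fdist x y)%N by apply: fdist_pos.
case: (eqVneq z x) => [->|zx].
  rewrite fdistxx hs /=.
  case: (ltnP 1 (fdist x y)) => h1; last by case: eqP => //; lia.
  have xS : x != ordS x by apply/eqP => e; move: nPx; rewrite {1}e ordSK eqxx.
  by apply: gp; rewrite fdist_Sr // fdistxx.
have fzx : (0 < fdist x z)%N by apply: fdist_pos.
have Sz : x != ordS z by apply/eqP => e; move: zP; rewrite e ordSK eqxx.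
case: (ltnP (fdist x z).+1 (fdist x y)) => h1.
  have g1 : partO (w z) = None by apply: gp; lia.
  have g2 : partO (w (ordS z)) = None by apply: gp; rewrite fdist_Sr //; lia.
  by rewrite g1 g2.
case: eqP => h2 //.
have g1 : partO (w z) = None by apply: gp; lia.
by rewrite g1.
Qed.

End F2.


Section F3.
Variables (R : realFieldType) (L n : nat) (p q : 'I_n.+1 -> R).
Local Open Scope ring_scope.

Lemma sum_ifeq (T : finType) (P : pred T) (v : T) (a : R) :
  \sum_(i | P i) (if v == i then a else 0) = if P v then a else 0.
Proof.
case Pv: (P v).
  rewrite (bigD1 v) //= eqxx big1 ?addr0 // => i /andP [_ ne].
  by rewrite eq_sym (negbTE ne).
by apply: big1 => i Pi; case: eqP => // e; move: Pv; rewrite e Pi.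
Qed.

Lemma inOmega_Proj (w : wordO L.+1 n.+1) : inOmega w = inPsi (Proj w).
Proof. by rewrite /inOmega /inPsi; apply: eq_cyc_ok => z; rewrite ffunE. Qed.

Lemma rate_lump (w : wordO L.+1 n.+1) psi' : inOmega w -> inPsi psi' ->
  \sum_(w' | inOmega w' && (Proj w' == psi')) omega_rate p q w w' =
  asep_rate p q (Proj w) psi'.
Proof.
move=> Hw Hp.
have cond v : (inOmega v && (Proj v == psi')) = (Proj v == psi').
  by rewrite inOmega_Proj; case: eqP => [->|]; rewrite ?andbF ?Hp.
rewrite /omega_rate exchange_big /asep_rate; apply: eq_bigr => x _.
rewrite big_split /= ?ffunE; congr (_ + _).
  rewrite /rmove; case ex: (w x) => [k|i] /=; last by rewrite big1.
  case es: (w (ordS x)) => [k'|i] /=; first by rewrite big1.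
  rewrite sum_ifeq cond.
  case: (eqVneq i k) => [e|ne] /=.
    by subst i; rewrite proj_T2.
  by rewrite proj_swap.
rewrite /lmove; case ex: (w x) => [k|i] /=; last by rewrite big1.
case es: (w (ord_pred x)) => [k'|i] /=; first by rewrite big1.
rewrite sum_ifeq cond.
case: (eqVneq i k) => [e|ne] /=.
  by subst i; rewrite proj_T4.
by rewrite proj_swap.
Qed.

End F3.

Unset Implicit Arguments.

Theorem corollary3p3 (R : realFieldType) (L n : nat) (p q : 'I_n -> R)
    (pi : wordP L n -> R) (pihat : wordO L n -> R) :
  (1 <= n)%N -> (n < L)%N ->
  (forall k, 0 < p k)%R -> (forall k, 0 < q k)%R ->
  stationary (@inPsi L n) (asep_rate p q) pi ->
  stationary (@inOmega L n) (omega_rate p q) pihat ->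
  forall psi : wordP L n, inPsi psi ->
    pi psi = (\sum_(w : wordO L n | inOmega w && (Proj w == psi)) pihat w)%R.
Proof.
case: n => [|n] in p q pi pihat *; first by [].
case: L => [|L] in pi pihat *; first by [].
move=> _ nL pP qP Hpi [hn h1 hb] psi Hpsi.
have nL' : (n < L)%N by [].
set mu := fun ps : wordP L.+1 n.+1 =>
  (\sum_(w : wordO L.+1 n.+1 | inOmega w && (Proj w == ps)) pihat w)%R.
have PQ : forall w : wordO L.+1 n.+1, inOmega w -> inPsi (Proj w).
  by move=> w; rewrite inOmega_Proj.
have Hmu : stationary (@inPsi L.+1 n.+1) (asep_rate p q) mu.
  split.
  - move=> ps _; apply: sumr_ge0 => w /andP [Hw _]; exact: hn.
  - by rewrite -h1 [RHS](partition_big (@Proj _ _) (@inPsi _ _)).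
  - move=> y Hy.
    rewrite /mu.
    transitivity (\sum_(w | inOmega w) pihat w * asep_rate p q (Proj w) y)%R.
      rewrite [RHS](partition_big (@Proj _ _) (@inPsi _ _)) //=.
      apply: eq_bigr => ps _; rewrite mulr_suml; apply: eq_bigr => w /andP [_ /eqP ->] //.
    transitivity (\sum_(w | inOmega w) \sum_(w' | inOmega w' && (Proj w' == y))
                     pihat w * omega_rate p q w w')%R.
      by apply: eq_bigr => w Hw; rewrite -mulr_sumr rate_lump.
    rewrite exchange_big /=.
    transitivity (\sum_(w' | inOmega w' && (Proj w' == y))
                    pihat w' * \sum_(ps | inPsi ps) asep_rate p q y ps)%R; last first.
      by rewrite mulr_suml.
    apply: eq_bigr => w' /andP [Hw' /eqP <-]; rewrite hb //; congr (_ * _)%R.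
    rewrite (partition_big (@Proj _ _) (@inPsi _ _)) //=.
    by apply: eq_bigr => ps Hps; rewrite rate_lump.
have rge0 : forall a b : wordP L.+1 n.+1, (0 <= asep_rate p q a b)%R.
  by move=> a b; apply: (asep_ge0 pP qP).
exact: (stat_unique rge0 (psi_conn pP qP Hpsi nL') Hpi Hmu Hpsi).
Qed.
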